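(* For every prime $p$, every integer $t\ge 1$ and every integer $k$ with $1\le k\le p^t$, \[ \overline{M}_k(p^t)=\sum_{j=1}^{p^t} f_k\!\left(\left\lfloor \frac{p^t}{j}\right\rfloor\right)-\sum_{j=1}^{p^{t-1}} f_k\!\left(\left\lfloor \frac{p^{t-1}}{j}\right\rfloor\right)+(p-1)\sum_{s=1}^{t}p^{s-1}\sum_{m=1}^{p^{t-s}} f_k\!\left(\left\lfloor \frac{p^t}{1+(m-1)p^s}\right\rfloor\right). \]
   Context: For a nonempty finite set $A$ of positive integers, $(A)$ denotes the greatest common divisor of the elements of $A$. For $m,k\in\mathbb{N}$, $f_k(m)$ is the number of $k$-element subsets $A\subseteq\{1,2,\ldots,m\}$ with $(A)=1$ (so $f_k(m)=0$ if $m<k$). For $1\le k\le n$, \[ \overline{M}_k(n)=\sum_{\substack{A\subseteq\{1,\ldots,n\},\ \#A=k\\ \gcd((A),n)=1}}\gcd((A)-1,n), \] with the convention $\gcd(0,n)=n$. *)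

(* Defs.v *)
From mathcomp Require Import all_boot.
Set Implicit Arguments. Unset Strict Implicit. Unset Printing Implicit Defensive.

Definition setgcd (N : nat) (A : {set 'I_N}) : nat := \big[gcdn/0]_(a in A) (a : nat).

(* k-element subsets of {1,...,m}: subsets of 'I_(m.+1) not containing 0 *)
Definition ksubsets (m k : nat) : {set {set 'I_m.+1}} :=
  [set A : {set 'I_m.+1} | (ord0 \notin A) && (#|A| == k)].

Definition fk (k m : nat) : nat :=
  #|[set A in ksubsets m k | setgcd A == 1]|.

(* \overline{M}_k(n); note gcdn 0 n = n as in the paper's convention *)
Definition Mbar (k n : nat) : nat :=
  \sum_(A in ksubsets n k | coprime (setgcd A) n) gcdn (setgcd A).-1 n.

(* Main.v *)
Require Import Defs.
From mathcomp Require Import all_boot zify.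
Set Implicit Arguments. Unset Strict Implicit. Unset Printing Implicit Defensive.

Lemma setgcd_dvd N (A : {set 'I_N}) (a : 'I_N) : a \in A -> setgcd A %| a.
Proof. by move=> aA; move/dvdn_biggcdP: (dvdnn (setgcd A)); apply. Qed.

Lemma setgcd_pos n (A : {set 'I_n.+1}) a : a \in A -> ord0 \notin A ->
  0 < setgcd A <= n.
Proof.
move=> aA A0; have ha := setgcd_dvd aA.
have a0 : 0 < a by rewrite lt0n; apply: contraNneq A0 => a0; rewrite -[ord0]/(Ordinal (ltn0Sn n)); 
  rewrite (_ : Ordinal _ = a) //; apply: val_inj.
have := dvdn_leq a0 ha; have := ltn_ord a.
case: (setgcd A) ha => [|g] //=; first by rewrite dvd0n => /eqP a00; rewrite a00 in a0.
by move=> _ h1 h2; apply: leq_trans h2 _.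
Qed.

Section Count.
Variables (n k d : nat).
Hypothesis d0 : 0 < d.
Let m := n %/ d.
Let f (x : 'I_m.+1) : 'I_n.+1 := inord (d * x).

Lemma fval x : (f x : nat) = d * x.
Proof.
rewrite /f inordK // ltnS; apply: leq_trans (leq_mul (leqnn d) (leq_ord x)) _.
by rewrite /m mulnC leq_divM.
Qed.

Lemma f_inj : injective f.
Proof. by move=> x y /(congr1 (@nat_of_ord _)); rewrite !fval => /eqP; rewrite eqn_pmul2l // => /eqP /val_inj. Qed.

Lemma setgcd_im (B : {set 'I_m.+1}) : setgcd (f @: B) = d * setgcd B.
Proof.
rewrite /setgcd big_imset /=; last by move=> x y _ _; apply: f_inj.
rewrite (big_morph (muln d) (muln_gcdr d) (muln0 d)).
by apply: eq_bigr => x _; rewrite fval.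
Qed.

Lemma count_gcd :
  #|[set A in ksubsets n k | setgcd A == d]| = fk k m.
Proof.
rewrite /fk -(card_imset _ (@imset_inj _ _ _ f_inj)).
apply: eq_card => A; rewrite !inE.
apply/idP/imsetP.
- case/andP=> /andP [A0 /eqP cA] /eqP gA.
  have key : forall a, a \in A -> exists x, f x = a.
    move=> a aA; have da : d %| a by rewrite -gA setgcd_dvd.
    have am : a %/ d < m.+1 by rewrite ltnS leq_div2r // -ltnS.
    exists (inord (a %/ d)); apply: val_inj; rewrite /= fval inordK //.
    by rewrite mulnC divnK.
  have hA : A = f @: (f @^-1: A).
    apply/setP => a; apply/idP/imsetP.
      by move=> aA; case: (key a aA) => x fx; exists x; rewrite // inE fx.
    by case=> x; rewrite inE => + ->.
  exists (f @^-1: A) => //.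
  rewrite !inE.
  have f0 : f ord0 = ord0 by apply: val_inj; rewrite /= fval muln0.
  rewrite f0 A0 /= -(card_imset _ f_inj) -hA cA eqxx /=.
  move: gA; rewrite {1}hA setgcd_im -{2}(muln1 d) => /eqP.
  by rewrite eqn_pmul2l.
- case=> B; rewrite !inE => /andP [/andP [B0 /eqP cB] /eqP gB] ->.
  rewrite setgcd_im gB muln1 eqxx card_imset ?cB ?eqxx ?andbT //; last exact: f_inj.
  apply/imsetP => -[x xB] /(congr1 (@nat_of_ord _)); rewrite fval /= => /esym/eqP.
  rewrite muln_eq0 eqn0Ngt d0 /= => x0.
  by move: xB; rewrite (_ : x = ord0) ?(negbTE B0) //; apply: val_inj; apply/eqP.
Qed.
End Count.

Lemma Mbar_dec n k : 0 < k -> Mbar k n =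
  \sum_(0 <= e < n) (coprime e.+1 n * gcdn e n) * fk k (n %/ e.+1).
Proof.
move=> k0; rewrite /Mbar big_mkcondr /=.
transitivity (\sum_(A in ksubsets n k) \sum_(e < n)
   ((setgcd A == e.+1) * (coprime e.+1 n * gcdn e n))).
  apply: eq_bigr => A; rewrite inE => /andP [A0 /eqP cA].
  have : A != set0 by rewrite -card_gt0 cA.
  case/set0Pn => a aA; have /andP [g0 gn] := setgcd_pos aA A0.
  have h : (setgcd A).-1 < n by rewrite prednK.
  rewrite (bigD1 (Ordinal h)) //= prednK // eqxx mul1n big1 ?addn0.
    by case: (coprime _ _); rewrite ?mul1n ?mul0n.
  move=> e /negbTE he; case: eqP => // he'; move: he; rewrite (_ : Ordinal h = e) ?eqxx //.
  by apply: val_inj; rewrite /= he'.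
rewrite exchange_big big_mkord /=; apply: eq_bigr => e _.
rewrite -big_distrl /= mulnC; congr (_ * _).
rewrite -(count_gcd n k (ltn0Sn e)).
rewrite (eq_bigr (fun A => if setgcd A == e.+1 then 1 else 0)); last by move=> A _; case: eqP.
rewrite -big_mkcondr sum1_card; apply: eq_card => A; rewrite !inE.
by rewrite unfold_in /= inE.
Qed.

Lemma sum_res q M r (F : nat -> nat) : r < q ->
  \sum_(0 <= d < q * M) (d %% q == r) * F d = \sum_(0 <= j < M) F (q * j + r).
Proof.
move=> rq; elim: M => [|M IH]; first by rewrite muln0 !big_geq.
rewrite mulnS addnC (big_cat_nat (leq0n (q * M)) (leq_addr q _)) /= IH.
rewrite big_nat_recr //=; congr (_ + _).
rewrite -{1}[q * M]add0n big_addn.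
rewrite addKn.
rewrite (eq_big_nat _ _ (F2 := fun i => (i == r) * F (i + q * M))); last first.
  move=> i /andP [_ iq]; have -> : (i + q * M) %% q = i by rewrite addnC mulnC modnMDl modn_small.
  by [].
rewrite big_mkord (bigD1 (Ordinal rq)) //= eqxx mul1n big1 ?addn0.
  by rewrite addnC.
by move=> i /eqP ir; case: eqP => // h; case: ir; apply: val_inj.
Qed.

Lemma gcd_formula p e t : prime p ->
  gcdn e (p ^ t) = 1 + (p - 1) * \sum_(1 <= s < t.+1) p ^ s.-1 * (p ^ s %| e).
Proof.
move=> pp; have p0 := prime_gt0 pp.
elim: t => [|t IH]; first by rewrite big_geq // expn0 gcdn1 muln0.
rewrite big_nat_recr //= mulnDr addnA -IH.
case: (boolP (p ^ t.+1 %| e)) => h.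
  have ht : p ^ t %| e by apply: dvdn_trans h; rewrite dvdn_exp2l.
  rewrite (gcdn_idPr h) (gcdn_idPr ht) muln1.
  by rewrite -{1}(mul1n (p ^ t)) -mulnDl subnKC // expnS.
rewrite /= !muln0 addn0; apply/eqP; rewrite eqn_dvd; apply/andP; split.
  have : gcdn e (p ^ t.+1) %| p ^ t.+1 by apply: dvdn_gcdr.
  case/(dvdn_pfactor _ _ pp) => i; rewrite leq_eqVlt => /orP [/eqP -> hg|lt hg].
    by move: h; rewrite -hg dvdn_gcdl.
  rewrite dvdn_gcd dvdn_gcdl /= hg dvdn_exp2l //.
by rewrite dvdn_gcd dvdn_gcdl /= (dvdn_trans (dvdn_gcdr _ _)) // dvdn_exp2l.
Qed.

Lemma link p e : 0 < p -> (e %% p == p.-1) = (p %| e.+1).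
Proof.
move=> p0.
have E : e.+1 %% p = (e %% p).+1 %% p by rewrite -addn1 -modnDml addn1.
rewrite /dvdn E; move: (ltn_mod e p); rewrite p0 => hr; move: (e %% p) hr => r hr.
case: (ltngtP r.+1 p) => [lt|gt|eq].
- rewrite modn_small //=; apply/negbTE/eqP => rp; rewrite rp prednK // in lt.
  by rewrite ltnn in lt.
- lia.
- by rewrite eq modnn -eq /= eqxx.
Qed.

Lemma pointwise p t e : prime p -> 0 < t ->
  coprime e.+1 (p ^ t) * gcdn e (p ^ t) + (e %% p == p.-1) = gcdn e (p ^ t).
Proof.
move=> pp t0; rewrite link ?prime_gt0 // coprime_pexpr // coprime_sym prime_coprime //.
case: (boolP (p %| e.+1)) => h /=; last by rewrite mul1n addn0.
rewrite mul0n add0n; apply/esym/eqP; rewrite -/(coprime e (p ^ t)) coprime_pexpr //.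
rewrite coprime_sym prime_coprime //; apply/negP => pe.
by move: h; rewrite -addn1 (dvdn_addr _ pe) dvdn1 => /eqP p1; rewrite p1 in pp.
Qed.

Theorem mainTheorem4 (p t k : nat) :
  prime p -> 1 <= t -> 1 <= k <= p ^ t ->
  Mbar k (p ^ t) + \sum_(1 <= j < (p ^ t.-1).+1) fk k (p ^ t.-1 %/ j) =
  \sum_(1 <= j < (p ^ t).+1) fk k (p ^ t %/ j)
  + (p - 1) * \sum_(1 <= s < t.+1) p ^ s.-1 *
      \sum_(1 <= m < (p ^ (t - s)).+1) fk k (p ^ t %/ (1 + (m - 1) * p ^ s)).
Proof.
move=> pp t1 /andP [k1 _].
have p0 := prime_gt0 pp.
rewrite Mbar_dec //.
set N := p ^ t.
have S1 : \sum_(1 <= j < N.+1) fk k (N %/ j) = \sum_(0 <= e < N) fk k (N %/ e.+1)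
  by rewrite big_add1.
have S2 : \sum_(1 <= j < (p ^ t.-1).+1) fk k (p ^ t.-1 %/ j)
    = \sum_(0 <= e < N) (e %% p == p.-1) * fk k (N %/ e.+1).
  have eN : N = p * p ^ t.-1 by rewrite /N -expnS prednK.
  transitivity (\sum_(0 <= e < p * p ^ t.-1) (e %% p == p.-1) * fk k (N %/ e.+1));
    last by rewrite -eN.
  rewrite sum_res ?prednK ?ltn_predL // big_add1 /=.
  apply: eq_bigr => j _.
  rewrite (_ : (p * j + p.-1).+1 = p * j.+1); last by rewrite -addnS prednK // mulnS addnC.
  by rewrite divnMA eN mulKn.
have S3 : forall s, 1 <= s < t.+1 ->
    \sum_(1 <= m < (p ^ (t - s)).+1) fk k (N %/ (1 + (m - 1) * p ^ s))
    = \sum_(0 <= e < N) (e %% p ^ s == 0) * fk k (N %/ e.+1).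
  move=> s /andP [s1 st].
  have eN : N = p ^ s * p ^ (t - s) by rewrite /N -expnD subnKC.
  transitivity (\sum_(0 <= e < p ^ s * p ^ (t - s)) (e %% p ^ s == 0) * fk k (N %/ e.+1));
    last by rewrite -eN.
  rewrite sum_res ?expn_gt0 ?p0 // big_add1 /=.
  by apply: eq_bigr => m _; rewrite subn1 /= addn0 add1n (mulnC m).
rewrite S1 S2.
rewrite [X in (p - 1) * X](eq_big_nat _ _ (F2 := fun s => p ^ s.-1 *
   \sum_(0 <= e < N) (e %% p ^ s == 0) * fk k (N %/ e.+1))); last first.
  by move=> s hs; rewrite S3.
rewrite -big_split /=.
rewrite (eq_bigr (fun e => gcdn e N * fk k (N %/ e.+1))); last first.
  by move=> e _; rewrite -mulnDl pointwise.
apply: esym.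
transitivity (\sum_(0 <= e < N) (1 + (p - 1) * \sum_(1 <= s < t.+1) p ^ s.-1 * (p ^ s %| e))
   * fk k (N %/ e.+1)); last first.
  by apply: eq_bigr => e _; rewrite -gcd_formula.
rewrite [in RHS](eq_bigr (fun e => fk k (N %/ e.+1) + (p - 1) * \sum_(1 <= s < t.+1)
   p ^ s.-1 * ((p ^ s %| e) * fk k (N %/ e.+1)))); last first.
  move=> e _; rewrite mulnDl mul1n -mulnA big_distrl /=; congr (_ + _ * _).
  by apply: eq_bigr => s _; rewrite mulnA.
rewrite big_split /=; congr (_ + _).
rewrite -big_distrr /=; congr (_ * _).
rewrite exchange_big /=; apply: eq_bigr => s _; rewrite big_distrr /=.
by [].
Qed.
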